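(* A PFSA is irreducible if and only if it has no two distinct equivalent states. Furthermore, if two irreducible PFSA $G_1=(\Sigma,Q_1,\delta_1,\tilde\pi_1)$ and $G_2=(\Sigma,Q_2,\delta_2,\tilde\pi_2)$ generate the same stochastic process, then there is a bijection $f:Q_1\to Q_2$ such that $f(\delta_1(q,\sigma))=\delta_2(f(q),\sigma)$ and $\tilde\pi_2(f(q))=\tilde\pi_1(q)$ for all $q\in Q_1$, $\sigma\in\Sigma$.
   Context: A PFSA $G=(\Sigma,Q,\delta,\tilde\pi)$ consists of a finite alphabet $\Sigma$, a finite state set $Q$, observation probabilities $\tilde\pi(q,\cdot)$ (a probability distribution on $\Sigma$ for each $q$), and a partial transition map $\delta:Q\times\Sigma\to Q$ defined exactly where $\tilde\pi(q,\sigma)>0$; its graph (edges $q\to\delta(q,\sigma)$) is assumed strongly connected. It generates a process by emitting $\sigma$ with probability $\tilde\pi(q,\sigma)$ from current state $q$ and moving to $\delta(q,\sigma)$, the initial state drawn from the stationary distribution of the transition matrix $\pi(q,q')=\sum_{\sigma:\delta(q,\sigma)=q'}\tilde\pi(q,\sigma)$. $G$ is irreducible if no PFSA with strictly fewer states generates the same process. For a state $q$, $\mu_q$ is the probability measure on $\Sigma^\omega$ with $\mu_q(x\Sigma^\omega)=\tilde\pi(q,x)$, where for $x=\sigma_1\cdots\sigma_n$, $\tilde\pi(q,x)=\prod_{i=1}^n\tilde\pi(q_{i-1},\sigma_i)$ with $q_0=q$, $q_i=\delta(q_{i-1},\sigma_i)$ (and $0$ if some transition is undefined), i.e. the probability of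 emitting $x$ starting from $q$. Two states $q,q'$ are equivalent iff $\mu_q=\mu_{q'}$. *)

(* Defs.v *)
From HB Require Import structures.
From mathcomp Require Import all_boot all_order all_algebra.
From mathcomp Require Import reals.
Set Implicit Arguments. Unset Strict Implicit. Unset Printing Implicit Defensive.
Import Order.TTheory GRing.Theory Num.Theory.
Local Open Scope ring_scope.

Record pfsa (R : realType) (S Q : finType) := Pfsa {
  tpi : Q -> S -> R;
  delta : Q -> S -> option Q;
  tpi_ge0 : forall q s, 0 <= tpi q s;
  tpi_sum1 : forall q, \sum_(s : S) tpi q s = 1;
  delta_def : forall q s, (delta q s != None) = (0 < tpi q s);
  strongly_connected : forall q q' : Q,
    connect (fun a b => [exists s, delta a s == Some b]) q q'
}.

Section Defs.
Variables (R : realType) (S : finType).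

Fixpoint tpiw (Q : finType) (G : pfsa R S Q) (q : Q) (x : seq S) : R :=
  match x with
  | [::] => 1
  | s :: x' => match delta G q s with
               | Some q' => tpi G q s * tpiw G q' x'
               | None => 0
               end
  end.

Definition trans (Q : finType) (G : pfsa R S Q) (q q' : Q) : R :=
  \sum_(s : S | delta G q s == Some q') tpi G q s.

Definition stationary (Q : finType) (G : pfsa R S Q) (p : Q -> R) : Prop :=
  (forall q, 0 <= p q) /\ \sum_(q : Q) p q = 1 /\
  (forall q', \sum_(q : Q) p q * trans G q q' = p q').

(* probability of the cylinder x Sigma^omega under the process started
   from the initial distribution p *)
Definition word_prob (Q : finType) (G : pfsa R S Q) (p : Q -> R) (x : seq S) : R :=
  \sum_(q : Q) p q * tpiw G q x.

(* G1 and G2 generate the same stochastic process (initial states drawn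
   from the stationary distributions; equality of all cylinder probabilities) *)
Definition same_process (Q1 Q2 : finType) (G1 : pfsa R S Q1) (G2 : pfsa R S Q2) : Prop :=
  exists (p1 : Q1 -> R) (p2 : Q2 -> R),
    [/\ stationary G1 p1, stationary G2 p2 &
        forall x : seq S, word_prob G1 p1 x = word_prob G2 p2 x].

Definition irreducible (Q : finType) (G : pfsa R S Q) : Prop :=
  ~ exists (Q' : finType) (H : pfsa R S Q'), (#|Q'| < #|Q|)%N /\ same_process G H.

(* mu_q = mu_q' : equality of the measures on all cylinders *)
Definition equiv_states (Q : finType) (G : pfsa R S Q) (q q' : Q) : Prop :=
  forall x : seq S, tpiw G q x = tpiw G q' x.

End Defs.

(* Main.v *)
Require Import Defs.
From HB Require Import structures.
From mathcomp Require Import all_boot all_order all_algebra.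
From mathcomp Require Import reals.
From mathcomp Require Import boolp ring lra.
Import Order.TTheory GRing.Theory Num.Theory.
Local Open Scope ring_scope.
Set Implicit Arguments. Unset Strict Implicit. Unset Printing Implicit Defensive.

Section Basics.
Variables (R : realType) (S : finType).

Lemma tpi_le1 (Q : finType) (G : pfsa R S Q) q s : tpi G q s <= 1.
Proof.
rewrite -(tpi_sum1 G q) (bigD1 s) //= lerDl sumr_ge0 // => i _; exact: tpi_ge0.
Qed.

Lemma tpi0_none (Q : finType) (G : pfsa R S Q) q s : delta G q s = None -> tpi G q s = 0.
Proof.
move=> H; have := delta_def G q s; rewrite H eqxx /= => /esym/negbT.
by rewrite -leNgt => h; apply/eqP; rewrite eq_le h tpi_ge0.
Qed.

Lemma tpi_gt0_some (Q : finType) (G : pfsa R S Q) q s q' : delta G q s = Some q' -> 0 < tpi G q s.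
Proof. by move=> H; rewrite -delta_def H. Qed.

Lemma tpiw_ge0 (Q : finType) (G : pfsa R S Q) q x : 0 <= tpiw G q x.
Proof.
elim: x q => [|s x IH] q /=; first exact: ler01.
case: (delta G q s) => [q'|]; last exact: lexx. exact: mulr_ge0 (tpi_ge0 _ _ _) (IH _).
Qed.

Lemma tpiw_le1 (Q : finType) (G : pfsa R S Q) q x : tpiw G q x <= 1.
Proof.
elim: x q => [|s x IH] q /=; first exact: lexx.
case: (delta G q s) => [q'|]; last exact: ler01.
rewrite -[1]mulr1; apply: ler_pM; [exact: tpi_ge0|exact: tpiw_ge0|exact: tpi_le1|exact: IH].
Qed.

Fixpoint dstar (Q : finType) (G : pfsa R S Q) (q : Q) (x : seq S) : option Q :=
  match x with
  | [::] => Some q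
  | s :: x' => match delta G q s with Some q' => dstar G q' x' | None => None end
  end.

Definition tw (Q : finType) (G : pfsa R S Q) (o : option Q) w :=
  if o is Some r then tpiw G r w else 0.

Lemma tpiw_cat (Q : finType) (G : pfsa R S Q) q x w :
  tpiw G q (x ++ w) = tpiw G q x * tw G (dstar G q x) w.
Proof.
elim: x q => [|s x IH] q /=; first by rewrite mul1r.
case: (delta G q s) => [q'|] /=; last by rewrite mul0r.
by rewrite IH mulrA.
Qed.

Lemma dstar_none (Q : finType) (G : pfsa R S Q) q x : dstar G q x = None -> tpiw G q x = 0.
Proof.
elim: x q => [|s x IH] q //=.
by case: (delta G q s) => [q'|] // /IH ->; rewrite mulr0.
Qed.

Fixpoint wsum (n : nat) (F : seq S -> R) : R :=
  if n is n'.+1 then \sum_(s : S) wsum n' (fun w => F (s :: w)) else F [::].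

Lemma ler_wsum n (F G : seq S -> R) : (forall w, F w <= G w) -> wsum n F <= wsum n G.
Proof.
elim: n F G => [|n IH] F G H //=.
by apply: ler_sum => s _; apply: IH.
Qed.

Lemma wsum_ge0 n (F : seq S -> R) : (forall w, 0 <= F w) -> 0 <= wsum n F.
Proof.
elim: n F => [|n IH] F H //=.
by apply: sumr_ge0 => s _; apply: IH.
Qed.

Lemma wsumZ n c (F : seq S -> R) : wsum n (fun w => c * F w) = c * wsum n F.
Proof.
elim: n F => [|n IH] F //=.
by rewrite mulr_sumr; apply: eq_bigr => s _; rewrite IH.
Qed.

Lemma wsumD n (F G : seq S -> R) : wsum n (fun w => F w + G w) = wsum n F + wsum n G.
Proof.
elim: n F G => [|n IH] F G //=.
by rewrite -big_split; apply: eq_bigr => s _; rewrite IH.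
Qed.

Lemma wsum_sum n (I : Type) (r : seq I) (P : pred I) (F : I -> seq S -> R) :
  wsum n (fun w => \sum_(i <- r | P i) F i w) = \sum_(i <- r | P i) wsum n (F i).
Proof.
elim: n F => [|n IH] F //=.
rewrite exchange_big /=; apply: eq_bigr => s _; exact: IH.
Qed.

Lemma wsum0 n : wsum n (fun _ => 0) = 0.
Proof. by have := wsumZ n 0 (fun _ => 0); rewrite !mul0r. Qed.

Lemma eq_wsum n (F G : seq S -> R) : (forall w, F w = G w) -> wsum n F = wsum n G.
Proof.
elim: n F G => [|n IH] F G H //=.
by apply: eq_bigr => s _; apply: IH.
Qed.

Lemma wsum_cat n m (F : seq S -> R) :
  wsum (n + m) F = wsum n (fun x => wsum m (fun w => F (x ++ w))).
Proof.
elim: n F => [|n IH] F //=.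
by apply: eq_bigr => s _; rewrite IH.
Qed.

Lemma wsum_lt_ex n (F G : seq S -> R) : wsum n F < wsum n G -> exists w, F w < G w.
Proof.
elim: n F G => [|n IH] F G /=; first by move=> h; exists [::].
move=> h.
have [s hs] : exists s, wsum n (fun w => F (s :: w)) < wsum n (fun w => G (s :: w)).
  apply: contrapT => /forallNP hn; move: h; apply/negP; rewrite -leNgt.
  by apply: ler_sum => s _; rewrite leNgt; apply/negP; exact: hn.
by have [w hw] := IH _ _ hs; exists (s :: w).
Qed.

Lemma wsum_strict n (F G : seq S -> R) w0 :
  (forall w, F w <= G w) -> size w0 = n -> F w0 < G w0 -> wsum n F < wsum n G.
Proof.
elim: n F G w0 => [|n IH] F G [|s w0] H //= [Hs] Hlt.
rewrite (bigD1 s) //= [X in _ < X](bigD1 s) //=.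
apply: ltr_leD; first exact: (IH _ _ w0).
by apply: ler_sum => i _; apply: ler_wsum.
Qed.

Lemma wsum_tpiw (Q : finType) (G : pfsa R S Q) n q : wsum n (tpiw G q) = 1.
Proof.
elim: n q => [|n IH] q //=.
rewrite -(tpi_sum1 G q); apply: eq_bigr => s _ /=.
case E: (delta G q s) => [q'|].
  by rewrite wsumZ IH mulr1.
by rewrite (tpi0_none E) wsum0.
Qed.

Lemma tpiw_marg (Q : finType) (G : pfsa R S Q) q w :
  \sum_(s : S) tpiw G q (w ++ [:: s]) = tpiw G q w.
Proof.
under eq_bigr do rewrite tpiw_cat.
rewrite -mulr_sumr.
case E: (dstar G q w) => [r|] /=; last by rewrite (dstar_none E) mul0r.
rewrite -[RHS]mulr1; congr (_ * _).
apply: eq_trans (tpi_sum1 G r); apply: eq_bigr => s _ /=.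
case E2: (delta G r s) => [r'|] /=; first by rewrite mulr1.
by rewrite (tpi0_none E2).
Qed.

Lemma differ_ext (Q1 Q2 : finType) (G1 : pfsa R S Q1) (G2 : pfsa R S Q2) q1 q2 w0 :
  tpiw G1 q1 w0 != tpiw G2 q2 w0 ->
  forall N, (size w0 <= N)%N -> exists w, size w = N /\ tpiw G1 q1 w != tpiw G2 q2 w.
Proof.
move=> H N /subnKC <-; elim: (N - size w0)%N => [|k [w [Hs Hw]]].
  by exists w0; rewrite addn0.
have [s hs] : exists s, tpiw G1 q1 (w ++ [:: s]) != tpiw G2 q2 (w ++ [:: s]).
  apply: contrapT => /forallNP hn; move: Hw; apply/negP; rewrite negbK.
  rewrite -tpiw_marg -[X in _ == X]tpiw_marg; apply/eqP/eq_bigr => s _.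
  by have := hn s; move/negP; rewrite negbK => /eqP.
by exists (w ++ [:: s]); rewrite size_cat Hs /= addn1 addnS.
Qed.

End Basics.

Section Sync.
Variables (R : realType) (S : finType).

Definition meq (Q1 Q2 : finType) (G1 : pfsa R S Q1) (G2 : pfsa R S Q2) q1 q2 :=
  forall w, tpiw G1 q1 w = tpiw G2 q2 w.

Lemma meq_succ (Q1 Q2 : finType) (G1 : pfsa R S Q1) (G2 : pfsa R S Q2) q1 q2 s q1' :
  meq G1 G2 q1 q2 -> delta G1 q1 s = Some q1' ->
  exists q2', [/\ delta G2 q2 s = Some q2', meq G1 G2 q1' q2' & tpi G2 q2 s = tpi G1 q1 s].
Proof.
move=> H E; have hp := tpi_gt0_some E.
have := H [:: s]; rewrite /= E.
case E2: (delta G2 q2 s) => [q2'|]; last by rewrite mulr1 => h; move: hp; rewrite h ltxx.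
rewrite !mulr1 => ht; exists q2'; split => // w.
have := H (s :: w); rewrite /= E E2 ht => /(mulfI _); apply.
by rewrite -ht gt_eqF.
Qed.

Lemma dstar_cat (Q : finType) (G : pfsa R S Q) q x w :
  dstar G q (x ++ w) = obind (fun r => dstar G r w) (dstar G q x).
Proof.
elim: x q => [|s x IH] q //=.
by case: (delta G q s) => [q'|] //=.
Qed.

Lemma meq_dstar (Q1 Q2 : finType) (G1 : pfsa R S Q1) (G2 : pfsa R S Q2) q1 q2 w r1 r2 :
  meq G1 G2 q1 q2 -> 0 < tpiw G1 q1 w -> dstar G1 q1 w = Some r1 ->
  dstar G2 q2 w = Some r2 -> meq G1 G2 r1 r2.
Proof.
move=> H hp E1 E2 y.
have := H (w ++ y); rewrite !tpiw_cat E1 E2 /= -(H w) => /(mulfI _); apply.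
by rewrite gt_eqF.
Qed.

Lemma sum_some (Q : finType) (F : Q -> R) (o : option Q) :
  \sum_r F r * (o == Some r)%:R = if o is Some r0 then F r0 else 0.
Proof.
case: o => [r0|]; last by rewrite big1 // => r _; rewrite mulr0.
rewrite (bigD1 r0) //= eqxx mulr1 big1 ?addr0 // => r hr.
rewrite (_ : (Some r0 == Some r) = false) ?mulr0 //; apply/negbTE.
by apply: contra hr => /eqP [->].
Qed.

Lemma sqrtD_le (a b : R) : 0 <= a -> 0 <= b -> Num.sqrt (a + b) <= Num.sqrt a + Num.sqrt b.
Proof.
move=> ha hb.
have hs : 0 <= Num.sqrt a + Num.sqrt b by rewrite addr_ge0 // sqrtr_ge0.
rewrite -[X in _ <= X]ger0_norm // -sqrtr_sqr; apply: ler_wsqrtr.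
by rewrite sqrrD !sqr_sqrtr // -addrA lerD2l lerDr mulrn_wge0 // mulr_ge0 // sqrtr_ge0.
Qed.

Lemma sqrt_sum_le (I : Type) (r : seq I) (P : pred I) (F : I -> R) :
  (forall i, 0 <= F i) -> Num.sqrt (\sum_(i <- r | P i) F i) <= \sum_(i <- r | P i) Num.sqrt (F i).
Proof.
move=> hF; elim: r => [|a r IH]; first by rewrite !big_nil sqrtr0.
rewrite !big_cons; case: (P a) => //.
apply: le_trans (sqrtD_le (hF a) (sumr_ge0 _ (fun i _ => hF i))) _.
by rewrite lerD2l.
Qed.

Lemma amgm (a b : R) : 0 <= a -> 0 <= b -> Num.sqrt (a * b) <= 2^-1 * (a + b).
Proof.
move=> ha hb; rewrite sqrtrM // ler_pdivlMl // mulrC.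
have := sqr_ge0 (Num.sqrt a - Num.sqrt b).
by rewrite sqrrB !sqr_sqrtr // addrAC subr_ge0 mulr_natr.
Qed.

Lemma amgm_lt (a b : R) : 0 <= a -> 0 <= b -> a != b -> Num.sqrt (a * b) < 2^-1 * (a + b).
Proof.
move=> ha hb hab; rewrite sqrtrM // ltr_pdivlMl // mulrC.
have : 0 < (Num.sqrt a - Num.sqrt b) ^+ 2.
  rewrite lt_neqAle sqr_ge0 andbT eq_sym sqrf_eq0 subr_eq0.
  apply: contra hab => /eqP h.
  by rewrite -(sqr_sqrtr ha) -(sqr_sqrtr hb) h.
by rewrite sqrrB !sqr_sqrtr // addrAC subr_gt0 mulr_natr.
Qed.

Lemma eqle (x y : R) : x = y -> x <= y.
Proof. by move=> ->. Qed.

Lemma sum_lt_ex (I : finType) (F G : I -> R) : \sum_i F i < \sum_i G i -> exists i, F i < G i.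
Proof.
move=> h; apply: contrapT => /forallNP hn; move: h; apply/negP; rewrite -leNgt.
by apply: ler_sum => i _; rewrite leNgt; apply/negP; exact: hn.
Qed.

Variables (Q : finType) (G : pfsa R S Q) (p : Q -> R).
Hypothesis p_ge0 : forall q, 0 <= p q.
Hypothesis p_sum1 : \sum_q p q = 1.

Definition alpha x r := \sum_q p q * tpiw G q x * (dstar G q x == Some r)%:R.
Definition D r r' : bool := ~~ `[< meq G G r r' >].
Definition Phi x := \sum_r \sum_r' (D r r')%:R * Num.sqrt (alpha x r * alpha x r').
Definition Pw x := \sum_q p q * tpiw G q x.

Lemma alpha_ge0 x r : 0 <= alpha x r.
Proof. by apply: sumr_ge0 => q _; rewrite !mulr_ge0 // ?tpiw_ge0 ?ler0n. Qed.

Lemma Phi_ge0 x : 0 <= Phi x.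
Proof. by apply: sumr_ge0 => r _; apply: sumr_ge0 => r' _; rewrite mulr_ge0 ?ler0n ?sqrtr_ge0. Qed.

Lemma ind_ne (q1 i : Q) : i != q1 -> ((Some q1 == Some i)%:R : R) = 0.
Proof.
move=> hi; rewrite (_ : (Some q1 == Some i) = false) //; apply/negbTE.
by apply: contra hi => /eqP [->].
Qed.

Lemma alpha_cat x w r :
  alpha (x ++ w) r = \sum_q alpha x q * tpiw G q w * (dstar G q w == Some r)%:R.
Proof.
rewrite /alpha.
under [RHS]eq_bigr do rewrite !mulr_suml.
rewrite exchange_big /=; apply: eq_bigr => q0 _.
rewrite tpiw_cat dstar_cat.
case E: (dstar G q0 x) => [q1|] /=.
  rewrite (bigD1 q1) //= big1 ?addr0 => [|i hi]; last by rewrite ind_ne // !(mulr0, mul0r).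
  by rewrite eqxx mulr1 !mulrA.
by rewrite !(mulr0, mul0r) big1 // => i _; rewrite !(mulr0, mul0r).
Qed.

Lemma Pw_cat x w : Pw (x ++ w) = \sum_r alpha x r * tpiw G r w.
Proof.
rewrite /Pw /alpha.
under [RHS]eq_bigr do rewrite !mulr_suml.
rewrite exchange_big /=; apply: eq_bigr => q0 _.
rewrite tpiw_cat.
case E: (dstar G q0 x) => [q1|] /=.
  rewrite (bigD1 q1) //= big1 ?addr0 => [|i hi]; last by rewrite ind_ne // !(mulr0, mul0r).
  by rewrite eqxx mulr1 !mulrA.
by rewrite !(mulr0, mul0r) big1 // => i _; rewrite !(mulr0, mul0r).
Qed.

Lemma Pw_alpha x : Pw x = \sum_r alpha x r.
Proof. by rewrite -[x]cats0 Pw_cat; apply: eq_bigr => r _ /=; rewrite mulr1 cats0. Qed.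

Lemma wsum_Pw n : wsum n Pw = 1.
Proof.
rewrite /Pw wsum_sum -p_sum1; apply: eq_bigr => q _.
by rewrite wsumZ wsum_tpiw mulr1.
Qed.

Lemma sqrt_ind (b1 b2 : bool) (a : R) : 0 <= a ->
  Num.sqrt (a * (b1%:R * b2%:R)) = Num.sqrt a * (b1%:R * b2%:R).
Proof.
by move=> ha; case: b1; case: b2; rewrite ?mulr1 ?mulr0 ?mul0r ?sqrtr0.
Qed.

Lemma sum4_swap (F : Q -> Q -> Q -> Q -> R) :
  \sum_r \sum_r' \sum_q \sum_q' F r r' q q' = \sum_q \sum_q' \sum_r \sum_r' F r r' q q'.
Proof.
under eq_bigr do rewrite exchange_big /=.
rewrite exchange_big /=; apply: eq_bigr => q _.
under eq_bigr do rewrite exchange_big /=.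
by rewrite exchange_big.
Qed.

Lemma decay N c : 0 <= c ->
  (forall q q', D q q' -> wsum N (fun w => Num.sqrt (tpiw G q w * tpiw G q' w)) <= c) ->
  forall x, wsum N (fun w => Phi (x ++ w)) <= c * Phi x.
Proof.
move=> hc hBC x.
pose m q q' w := Num.sqrt (tpiw G q w * tpiw G q' w).
pose s q q' := Num.sqrt (alpha x q * alpha x q').
have step : forall w, Phi (x ++ w) <=
    \sum_q \sum_q' s q q' * ((D q q')%:R * m q q' w).
  move=> w.
  pose ι q r := ((dstar G q w == Some r)%:R : R).
  pose K q q' := \sum_r \sum_r' (D r r')%:R * (ι q r * ι q' r').
  apply: (@le_trans _ _ (\sum_q \sum_q' s q q' * (m q q' w * K q q'))).
    rewrite /Phi.
    apply: (@le_trans _ _ (\sum_r \sum_r' (D r r')%:R *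
        \sum_q \sum_q' s q q' * (m q q' w * (ι q r * ι q' r')))).
      apply: ler_sum => r _; apply: ler_sum => r' _.
      apply: ler_wpM2l; first exact: ler0n.
      rewrite !alpha_cat mulr_suml.
      apply: le_trans (sqrt_sum_le _ _ _) _.
        move=> q; rewrite mulr_sumr; apply: sumr_ge0 => q' _.
        by rewrite !mulr_ge0 ?alpha_ge0 ?tpiw_ge0 ?ler0n.
      apply: ler_sum => q _; rewrite mulr_sumr.
      apply: le_trans (sqrt_sum_le _ _ _) _.
        by move=> q'; rewrite !mulr_ge0 ?alpha_ge0 ?tpiw_ge0 ?ler0n.
      apply: ler_sum => q' _; apply: eqle.
      rewrite /s /m /ι.
      set a1 := alpha x q; set a2 := alpha x q'.
      set t1 := tpiw G q w; set t2 := tpiw G q' w.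
      set i1 := (dstar G q w == Some r); set i2 := (dstar G q' w == Some r').
      have -> : a1 * t1 * i1%:R * (a2 * t2 * i2%:R) = (a1 * a2) * (t1 * t2) * (i1%:R * i2%:R).
        by rewrite -!mulrA; congr (_ * _); rewrite [RHS]mulrC -!mulrA; congr (_ * _);
           rewrite [RHS]mulrC -!mulrA; congr (_ * _); rewrite [RHS]mulrC -!mulrA.
      rewrite sqrt_ind ?mulr_ge0 ?alpha_ge0 ?tpiw_ge0 // sqrtrM ?mulr_ge0 ?alpha_ge0 //.
      by rewrite -!mulrA.
    apply: eqle.
    under eq_bigr do under eq_bigr do rewrite mulr_sumr.
    under eq_bigr do under eq_bigr do under eq_bigr do rewrite mulr_sumr.
    rewrite sum4_swap; apply: eq_bigr => q _; apply: eq_bigr => q' _.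
    rewrite /K mulr_sumr mulr_sumr; apply: eq_bigr => r _.
    rewrite mulr_sumr mulr_sumr; apply: eq_bigr => r' _.
    by rewrite mulrCA; congr (_ * _); rewrite mulrCA.
  apply: ler_sum => q _; apply: ler_sum => q' _.
  apply: ler_wpM2l; first exact: sqrtr_ge0.
  have hm : 0 <= m q q' w by exact: sqrtr_ge0.
  have -> : K q q' = if dstar G q w is Some r0 then
                       if dstar G q' w is Some r0' then (D r0 r0')%:R else 0 else 0.
    rewrite /K /ι.
    under eq_bigr do under eq_bigr do rewrite mulrA.
    under eq_bigr do rewrite sum_some.
    under eq_bigr => r _ do (rewrite (_ : (if _ is Some r0 then _ else _) =
        (if dstar G q' w is Some r0 then (D r r0)%:R else 0) * (dstar G q w == Some r)%:R);
        last by case: (dstar G q' w) => [r0|]; rewrite ?mul0r // mulrC).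
    rewrite sum_some.
    by case: (dstar G q w) => [r0|].
  case E1: (dstar G q w) => [r0|]; last by rewrite mulr0 mulr_ge0 ?ler0n.
  case E2: (dstar G q' w) => [r0'|]; last by rewrite mulr0 mulr_ge0 ?ler0n.
  case hD: (D q q').
    by rewrite mulrC; apply: ler_wpM2r => //; case: (D r0 r0').
  move: hD; rewrite /D => /negbFE /asboolP hmeq.
  have [ht|ht] := eqVneq (tpiw G q w) 0.
    by rewrite /m ht mul0r sqrtr0 !mul0r.
  have htp : 0 < tpiw G q w by rewrite lt_neqAle eq_sym ht tpiw_ge0.
  have := meq_dstar hmeq htp E1 E2 => hr.
  by rewrite (asboolT hr) /= mulr0 mul0r.
apply: (@le_trans _ _ (wsum N (fun w => \sum_q \sum_q' s q q' * ((D q q')%:R * m q q' w)))).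
  exact: ler_wsum.
rewrite wsum_sum /Phi mulr_sumr; apply: ler_sum => q _.
rewrite wsum_sum mulr_sumr; apply: ler_sum => q' _.
rewrite wsumZ wsumZ.
case hD: (D q q'); last by rewrite !mul0r !mulr0.
rewrite !mul1r mulrC; apply: ler_wpM2r; first exact: sqrtr_ge0.
exact: hBC.
Qed.

End Sync.

Section Conc.
Variables (R : realType) (S : finType).
Variables (Q : finType) (G : pfsa R S Q) (p : Q -> R).
Hypothesis p_ge0 : forall q, 0 <= p q.

Lemma concentrate x eps : 0 < eps -> Phi G p x < eps * Pw G p x ->
  exists q, forall w, `|Pw G p (x ++ w) - Pw G p x * tpiw G q w| < eps * Pw G p x.
Proof.
move=> he hPhi.
set T := Pw G p x.
have hT : 0 < T.
  have := le_lt_trans (Phi_ge0 G p x) hPhi; by rewrite pmulr_rgt0.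
pose b := alpha G p x.
have hb0 : forall r, 0 <= b r by move=> r; exact: alpha_ge0.
have hTb : T = \sum_r b r by rewrite /T Pw_alpha.
have hbT : forall r, b r <= T.
  move=> r; rewrite hTb (bigD1 r) //= lerDl sumr_ge0 // => i _.
pose X q := \sum_r (D G q r)%:R * b r.
have claim1 : \sum_q b q * X q <= T * Phi G p x.
  rewrite /Phi mulr_sumr; apply: ler_sum => q _.
  rewrite /X mulr_sumr mulr_sumr; apply: ler_sum => r _.
  rewrite mulrCA [X in _ <= X]mulrCA; apply: ler_wpM2l; first exact: ler0n.
  set sq := Num.sqrt _.
  have hsq : sq * sq = b q * b r.
    by rewrite -expr2 sqr_sqrtr // mulr_ge0.
  have hsqT : sq <= T.
    rewrite -(ger0_norm (ltW hT)) -sqrtr_sqr; apply: ler_wsqrtr.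
    by rewrite expr2 ler_pM.
  by rewrite -hsq; apply: ler_wpM2r => //; exact: sqrtr_ge0.
have : \sum_q b q * X q < \sum_q b q * (eps * T).
  rewrite -mulr_suml -hTb; apply: le_lt_trans claim1 _.
  by rewrite ltr_pM2l.
move=> /sum_lt_ex [q hq].
have hbq : 0 < b q.
  rewrite lt_neqAle hb0 andbT; apply: contraTneq hq => <-.
  by rewrite !mul0r ltxx.
have hX : X q < eps * T by rewrite -(ltr_pM2l hbq).
exists q => w.
apply: le_lt_trans hX.
rewrite Pw_cat hTb mulr_suml -sumrB.
apply: le_trans (ler_norm_sum _ _ _) _.
apply: ler_sum => r _.
rewrite -mulrBr normrM (ger0_norm (hb0 r)).
case hD: (D G q r).
  rewrite mul1r mulrC ler_piMl ?normr_ge0 //.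
  have := tpiw_ge0 G r w; have := tpiw_le1 G r w.
  have := tpiw_ge0 G q w; have := tpiw_le1 G q w.
  move=> *; rewrite ler_norml; apply/andP; split; lra.
move: hD; rewrite /D => /negbFE /asboolP hm.
by rewrite -(hm w) subrr normr0 mulr0 mul0r.
Qed.

Lemma contraction : exists N0, forall N, (N0 <= N)%N -> exists c, [/\ 0 <= c, c < 1 &
  forall q q', D G q q' -> wsum N (fun w => Num.sqrt (tpiw G q w * tpiw G q' w)) <= c].
Proof.
have hw : forall pr : Q * Q, exists w, D G pr.1 pr.2 -> tpiw G pr.1 w != tpiw G pr.2 w.
  move=> [q q'] /=; case hD: (D G q q'); last by exists [::].
  move: hD; rewrite /D => /asboolPn hn.
  suff [w hw] : exists w, tpiw G q w != tpiw G q' w by exists w.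
  apply: contrapT => hne; apply: hn => w; apply: contrapT => h; apply: hne.
  by exists w; apply/eqP.
have [wit hwit] := choice hw.
exists (\max_(pr : Q * Q) size (wit pr))%N => N hN.
pose BC (pr : Q * Q) := wsum N (fun w => Num.sqrt (tpiw G pr.1 w * tpiw G pr.2 w)).
exists (\big[Num.max/0]_(pr : Q * Q | D G pr.1 pr.2) BC pr); split.
- exact: bigmax_ge_id.
- apply: bigmax_lt => // pr hD.
  have hs : (size (wit pr) <= N)%N.
    by apply: leq_trans hN; exact: (leq_bigmax pr).
  have [w [hsw hne]] := differ_ext (hwit pr hD) hs.
  have -> : 1 = wsum N (fun w => 2^-1 * (tpiw G pr.1 w + tpiw G pr.2 w)).
    by rewrite wsumZ wsumD !wsum_tpiw mulVf // pnatr_eq0.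
  apply: (wsum_strict (w0 := w)) => //.
    by move=> w'; apply: amgm; exact: tpiw_ge0.
  by apply: amgm_lt => //; exact: tpiw_ge0.
- move=> q q' hD; exact: (le_bigmax_cond _ (P := fun pr : Q * Q => D G pr.1 pr.2) (j := (q, q'))).
Qed.

End Conc.

Section Geo.
Variable R : realType.

Lemma bernoulli (d : R) k : 0 <= d -> 1 + k%:R * d <= (1 + d) ^+ k.
Proof.
move=> hd; elim: k => [|k IH]; first by rewrite mul0r addr0 expr0.
rewrite exprSr; apply: le_trans (ler_wpM2r _ IH); last by lra.
rewrite -natr1; have := mulr_ge0 (ler0n R k) (mulr_ge0 hd hd); nra.
Qed.

Lemma geo (c M eps : R) : 0 <= c -> c < 1 -> 0 <= M -> 0 < eps -> exists k, c ^+ k * M < eps.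
Proof.
move=> hc0 hc1 hM he.
have [->|hc] := eqVneq c 0; first by exists 1%N; rewrite expr1 mul0r.
have hcp : 0 < c by rewrite lt_neqAle eq_sym hc hc0.
set d := c^-1 - 1.
have hd : 0 < d by rewrite /d subr_gt0 invf_gt1.
have hed : 0 < eps * d by rewrite mulr_gt0.
have hx : 0 <= M / (eps * d) by rewrite divr_ge0 // ltW.
set k := Num.Def.archi_bound (M / (eps * d)).
have hk := archi_boundP hx; rewrite -/k in hk.
exists k.
have hck : 0 < c ^+ k by rewrite exprn_gt0.
have hinv : c ^+ k * (1 + d) ^+ k = 1.
  by rewrite -exprMn /d addrC subrK mulfV ?expr1n // gt_eqF.
have hb := bernoulli k (ltW hd).
have h1 : M < eps * (1 + d) ^+ k.
  rewrite ltr_pdivrMr // in hk.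
  apply: lt_le_trans hk _.
  apply: le_trans (_ : eps * (1 + k%:R * d) <= _); last by rewrite ler_pM2l.
  lra.
by move: h1; rewrite -(ltr_pM2l hck) mulrCA hinv mulr1.
Qed.

End Geo.

Section Key.
Variables (R : realType) (S : finType).
Variables (Q1 Q2 : finType) (G1 : pfsa R S Q1) (G2 : pfsa R S Q2) (p1 : Q1 -> R) (p2 : Q2 -> R).
Hypothesis p1_ge0 : forall q, 0 <= p1 q.
Hypothesis p1_sum1 : \sum_q p1 q = 1.
Hypothesis p2_ge0 : forall q, 0 <= p2 q.
Hypothesis p2_sum1 : \sum_q p2 q = 1.
Hypothesis same : forall x, word_prob G1 p1 x = word_prob G2 p2 x.

Lemma key_one : exists q h, meq G1 G2 q h.
Proof.
apply: contrapT => /forallNP hn.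
have hw : forall pr : Q1 * Q2, exists w, tpiw G1 pr.1 w != tpiw G2 pr.2 w.
  move=> [q h] /=; apply: contrapT => hne; apply: (hn q); exists h => w.
  by apply: contrapT => hh; apply: hne; exists w; apply/eqP.
have [wit hwit] := choice hw.
pose gap (pr : Q1 * Q2) := `|tpiw G1 pr.1 (wit pr) - tpiw G2 pr.2 (wit pr)|.
have hgap : forall pr, 0 < gap pr by move=> pr; rewrite normr_gt0 subr_eq0.
pose m := \big[Num.min/1]_(pr : Q1 * Q2) gap pr.
have hm : 0 < m by apply: lt_bigmin => // pr _.
have hmg : forall pr, m <= gap pr by move=> pr; exact: (bigmin_le_cond _ (P := xpredT)).
set eps := m / 2.
have he : 0 < eps by rewrite divr_gt0.
have [N1 hN1] := contraction G1.
have [N2 hN2] := contraction G2.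
have [c1 [hc10 hc11 hc1]] := hN1 (maxn N1 N2) (leq_maxl _ _).
have [c2 [hc20 hc21 hc2]] := hN2 (maxn N1 N2) (leq_maxr _ _).
set N := maxn N1 N2.
set c := Num.max c1 c2.
have hc0 : 0 <= c by rewrite le_max hc10.
have hc1' : c < 1 by rewrite gt_max hc11 hc21.
have hb1 : forall q q', D G1 q q' -> wsum N (fun w => Num.sqrt (tpiw G1 q w * tpiw G1 q' w)) <= c.
  by move=> q q' hD; apply: le_trans (hc1 q q' hD) _; rewrite le_max lexx.
have hb2 : forall q q', D G2 q q' -> wsum N (fun w => Num.sqrt (tpiw G2 q w * tpiw G2 q' w)) <= c.
  by move=> q q' hD; apply: le_trans (hc2 q q' hD) _; rewrite le_max lexx orbT.
pose A n := wsum n (fun x => Phi G1 p1 x + Phi G2 p2 x).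
have hA : forall n, A (n + N)%N <= c * A n.
  move=> n; rewrite /A wsum_cat -wsumZ; apply: ler_wsum => x.
  rewrite wsumD mulrDr; apply: lerD.
    exact: (decay p1_ge0 hc0 hb1).
  exact: (decay p2_ge0 hc0 hb2).
have hAk : forall k, A (k * N)%N <= c ^+ k * A 0%N.
  elim=> [|k IH]; first by rewrite mul0n expr0 mul1r.
  rewrite mulSn addnC exprS -mulrA; apply: le_trans (hA _) _.
  by rewrite ler_wpM2l.
have hA0 : 0 <= A 0%N by rewrite /A /= addr_ge0 ?Phi_ge0.
have [k hk] := geo hc0 hc1' hA0 he.
have : A (k * N)%N < wsum (k * N) (fun x => eps * Pw G1 p1 x).
  by rewrite wsumZ wsum_Pw // mulr1; apply: le_lt_trans (hAk k) hk.
move=> /wsum_lt_ex [x hx].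
have hPw : Pw G2 p2 x = Pw G1 p1 x by rewrite /Pw -!/(word_prob _ _ _) same.
have hx1 : Phi G1 p1 x < eps * Pw G1 p1 x.
  by apply: le_lt_trans hx; rewrite lerDl Phi_ge0.
have hx2 : Phi G2 p2 x < eps * Pw G2 p2 x.
  by rewrite hPw; apply: le_lt_trans hx; rewrite lerDr Phi_ge0.
have [q hq] := concentrate p1_ge0 he hx1.
have [h hh] := concentrate p2_ge0 he hx2.
set T := Pw G1 p1 x.
have hT : 0 < T.
  have := le_lt_trans (Phi_ge0 G1 p1 x) hx1; by rewrite pmulr_rgt0.
set w := wit (q, h).
have := hq w; have := hh w; rewrite hPw.
have hPwc : Pw G2 p2 (x ++ w) = Pw G1 p1 (x ++ w) by rewrite /Pw -!/(word_prob _ _ _) same.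
rewrite hPwc -/T => h2 h1.
have : T * gap (q, h) < T * m.
  have -> : T * gap (q, h) = `|(Pw G1 p1 (x ++ w) - T * tpiw G2 h w) - (Pw G1 p1 (x ++ w) - T * tpiw G1 q w)|.
    rewrite /gap /= -/w -(ger0_norm (ltW hT)) -normrM; congr `|_|.
    by rewrite (ger0_norm (ltW hT)); ring.
  rewrite (_ : T * m = eps * T + eps * T); last by rewrite /eps; field.
  apply: le_lt_trans (ler_normB _ _) _.
  exact: ltrD.
rewrite ltr_pM2l // => /lt_le_trans /(_ (hmg (q, h))).
by rewrite ltxx.
Qed.

Lemma key_all : forall q, exists h, meq G1 G2 q h.
Proof.
have [q0 [h0 H0]] := key_one.
move=> q; have := strongly_connected G1 q0 q.
move/connectP => [pth hp ->].
elim: pth q0 h0 H0 hp => [|y pth IH] q0 h0 H0 /=; first by exists h0.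
move/andP => [/existsP [s /eqP hs] hp].
have [h' [_ hm _]] := meq_succ H0 hs.
exact: IH hm hp.
Qed.

End Key.

Section Stat.
Variables (R : realType) (S : finType).

Lemma trans_ge0 (Q : finType) (G : pfsa R S Q) q q' : 0 <= trans G q q'.
Proof. by apply: sumr_ge0 => s _; exact: tpi_ge0. Qed.

Lemma trans_sum1 (Q : finType) (G : pfsa R S Q) q : \sum_q' trans G q q' = 1.
Proof.
rewrite /trans; under eq_bigr do rewrite big_mkcond /=.
rewrite exchange_big /= -(tpi_sum1 G q); apply: eq_bigr => s _.
case E: (delta G q s) => [r|].
  rewrite (bigD1 r) //= eqxx big1 ?addr0 // => i hi.
  by rewrite (_ : (Some r == Some i) = false) //; apply/negbTE; apply: contra hi => /eqP [->].
by rewrite big1 ?(tpi0_none E).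
Qed.

Lemma sum_ev (Q : finType) (F : Q -> R) : \sum_(j < #|Q|) F (enum_val j) = \sum_q F q.
Proof. by rewrite (big_enum_val F). Qed.

Lemma exists_stationary (Q : finType) (G : pfsa R S Q) (q0 : Q) : exists p, stationary G p.
Proof.
pose n := #|Q|.
pose A : 'M[R]_n := \matrix_(i, j) trans G (enum_val i) (enum_val j).
have hA0 : forall i j, 0 <= A i j by move=> i j; rewrite mxE trans_ge0.
have hrow : forall i, \sum_j A i j = 1.
  move=> i; under eq_bigr do rewrite mxE.
  by rewrite (sum_ev (fun q => trans G (enum_val i) q)) trans_sum1.
pose c : 'cV[R]_n := const_mx 1.
have hB : (A - 1%:M) *m c = 0.
  apply/matrixP => i k; rewrite mulmxBl mul1mx !mxE.
  under eq_bigr do rewrite !mxE mulr1.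
  by rewrite (sum_ev (fun q => trans G (enum_val i) q)) trans_sum1 subrr.
have hdet : \det (A - 1%:M) == 0.
  rewrite -det_tr; apply/det0P; exists c^T.
    apply/eqP => /matrixP /(_ 0 (enum_rank q0)); rewrite !mxE => /eqP.
    by rewrite oner_eq0.
  by rewrite -trmx_mul hB trmx0.
have [v hv0 hv] := det0P hdet.
have hvA : forall j, v 0 j = \sum_i v 0 i * A i j.
  move=> j; move/matrixP: hv => /(_ 0 j); rewrite mulmxBr mulmx1 !mxE => /eqP.
  by rewrite subr_eq0 => /eqP <-.
pose u i := `|v 0 i|.
have hu0 : forall i, 0 <= u i by move=> i; exact: normr_ge0.
have hu : forall j, u j <= \sum_i u i * A i j.
  move=> j; rewrite /u hvA; apply: le_trans (ler_norm_sum _ _ _) _.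
  by apply: ler_sum => i _; rewrite normrM (ger0_norm (hA0 i j)).
have hs : \sum_j (\sum_i u i * A i j - u j) = 0.
  rewrite sumrB exchange_big /=.
  under eq_bigr do rewrite -mulr_sumr hrow mulr1.
  by rewrite subrr.
have heq : forall j, \sum_i u i * A i j = u j.
  move=> j.
  have hge : forall k, xpredT k -> 0 <= \sum_i u i * A i k - u k.
    by move=> k _; rewrite subr_ge0.
  have := psumr_eq0P hge hs (i := j) isT.
  by move/eqP; rewrite subr_eq0 => /eqP.
pose Z := \sum_i u i.
have hZ : 0 < Z.
  have [i hi] : exists i, v 0 i != 0.
    apply: contrapT => /forallNP hn; move/eqP: hv0; apply.
    apply/matrixP => a b; rewrite (ord1 a) mxE.
    by apply: contrapT => hne; apply: (hn b); apply/eqP.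
  apply: lt_le_trans (_ : u i <= Z).
    by rewrite /u normr_gt0.
  by rewrite /Z (bigD1 i) //= lerDl sumr_ge0.
exists (fun q => u (enum_rank q) / Z); split.
- by move=> q; rewrite divr_ge0 // ltW.
- split.
    rewrite -(sum_ev (fun q => u (enum_rank q) / Z)).
    under eq_bigr do rewrite enum_valK.
    by rewrite -mulr_suml mulfV // gt_eqF.
  move=> q'.
  rewrite -(sum_ev (fun q => u (enum_rank q) / Z * trans G q q')).
  under eq_bigr => i _ do rewrite enum_valK -[q' in trans _ _ q'](enum_rankK q') mulrAC.
  rewrite -mulr_suml -(heq (enum_rank q')); congr (_ / _).
  by apply: eq_bigr => i _; rewrite mxE.
Qed.

End Stat.

Section Misc.
Variables (R : realType) (S : finType).

Lemma meq_sym (Q1 Q2 : finType) (G1 : pfsa R S Q1) (G2 : pfsa R S Q2) q1 q2 :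
  meq G1 G2 q1 q2 -> meq G2 G1 q2 q1.
Proof. by move=> H w; rewrite H. Qed.

Lemma meq_trans (Q1 Q2 Q3 : finType) (G1 : pfsa R S Q1) (G2 : pfsa R S Q2) (G3 : pfsa R S Q3) q1 q2 q3 :
  meq G1 G2 q1 q2 -> meq G2 G3 q2 q3 -> meq G1 G3 q1 q3.
Proof. by move=> H1 H2 w; rewrite H1 H2. Qed.

Lemma meq_delta_none (Q1 Q2 : finType) (G1 : pfsa R S Q1) (G2 : pfsa R S Q2) q1 q2 s :
  meq G1 G2 q1 q2 -> delta G1 q1 s = None -> delta G2 q2 s = None.
Proof.
move=> H E; case E2: (delta G2 q2 s) => [y|] //.
have [y' [hy _ _]] := meq_succ (meq_sym H) E2.
by rewrite E in hy.
Qed.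

Lemma meq_tpi (Q1 Q2 : finType) (G1 : pfsa R S Q1) (G2 : pfsa R S Q2) q1 q2 s :
  meq G1 G2 q1 q2 -> tpi G2 q2 s = tpi G1 q1 s.
Proof.
move=> H; case E: (delta G1 q1 s) => [y|].
  by have [y' [_ _ ->]] := meq_succ H E.
by rewrite (tpi0_none E) (tpi0_none (meq_delta_none H E)).
Qed.

End Misc.

Section Quot.
Variables (R : realType) (S : finType) (Q : finType) (G : pfsa R S Q).

Definition rep (q : Q) : Q := odflt q [pick r | `[< meq G G q r >] ].

Lemma rep_meq q : meq G G q (rep q).
Proof.
rewrite /rep; case: pickP => [r /asboolP //|_] /=.
by move=> w.
Qed.

Lemma rep_eq q q' : meq G G q q' -> rep q = rep q'.
Proof.
move=> H; rewrite /rep (eq_pick (Q := fun r => `[< meq G G q' r >])).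
  case: pickP => [//|h] /=.
  by have := h q'; rewrite (asboolT (fun w => erefl)).
move=> r; apply/asboolP/asboolP => h.
  exact: meq_trans (meq_sym H) h.
exact: meq_trans H h.
Qed.

Lemma rep_rep q : rep (rep q) = rep q.
Proof. by apply: rep_eq; apply: meq_sym; apply: rep_meq. Qed.

Notation QQ := {q : Q | rep q == q}.

Definition mk (q : Q) : QQ := exist _ (rep q) (introT eqP (rep_rep q)).

Lemma mk_val (c : QQ) : mk (val c) = c.
Proof. by apply: val_inj => /=; apply/eqP; exact: (valP c). Qed.

Lemma mk_eq q q' : meq G G q q' -> mk q = mk q'.
Proof. by move=> H; apply: val_inj => /=; exact: rep_eq. Qed.

Definition qtpi (c : QQ) s := tpi G (val c) s.
Definition qdelta (c : QQ) s := omap mk (delta G (val c) s).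

Lemma qtpi_ge0 c s : 0 <= qtpi c s.
Proof. exact: tpi_ge0. Qed.

Lemma qtpi_sum1 c : \sum_s qtpi c s = 1.
Proof. exact: tpi_sum1. Qed.

Lemma qdelta_def c s : (qdelta c s != None) = (0 < qtpi c s).
Proof. by rewrite /qdelta /qtpi -delta_def; case: (delta G (val c) s). Qed.

Lemma qdelta_mk q s : qdelta (mk q) s = omap mk (delta G q s).
Proof.
rewrite /qdelta /=.
case E: (delta G q s) => [y|] /=.
  have [y' [-> hm _]] := meq_succ (rep_meq q) E.
  by congr Some; apply: esym; apply: mk_eq.
by rewrite (meq_delta_none (rep_meq q) E).
Qed.

Lemma qtpi_mk q s : qtpi (mk q) s = tpi G q s.
Proof. by rewrite /qtpi /= (meq_tpi s (rep_meq q)). Qed.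

Lemma qconn_path a pth : path (fun a b => [exists s, delta G a s == Some b]) a pth ->
  connect (fun a b => [exists s, qdelta a s == Some b]) (mk a) (mk (last a pth)).
Proof.
elim: pth a => [|y pth IH] a /=; first by move=> _; exact: connect0.
move/andP => [/existsP [s /eqP hs] hp].
apply: connect_trans (IH _ hp).
apply: connect1; apply/existsP; exists s.
by rewrite qdelta_mk hs.
Qed.

Lemma qconn (c c' : QQ) : connect (fun a b => [exists s, qdelta a s == Some b]) c c'.
Proof.
have := strongly_connected G (val c) (val c').
move/connectP => [pth hp hl].
by have := qconn_path hp; rewrite -hl !mk_val.
Qed.

Definition qG : pfsa R S QQ := Pfsa qtpi_ge0 qtpi_sum1 qdelta_def qconn.

Lemma qtpiw_mk q x : tpiw qG (mk q) x = tpiw G q x.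
Proof.
elim: x q => [|s x IH] q //=.
rewrite (qdelta_mk q s); case: (delta G q s) => [y|] //=.
by rewrite IH qtpi_mk.
Qed.

Lemma sum_part (F : Q -> R) : \sum_(c : QQ) \sum_(q | mk q == c) F q = \sum_q F q.
Proof. by rewrite (partition_big mk xpredT). Qed.

Variable (p : Q -> R).
Hypothesis hp : stationary G p.

Definition qp (c : QQ) := \sum_(q | mk q == c) p q.

Lemma some_eq (T : eqType) (a b : T) : (Some a == Some b) = (a == b).
Proof. by apply/eqP/eqP => [[]|->]. Qed.

Lemma qtrans_mk q c' : trans qG (mk q) c' = \sum_(q'' | mk q'' == c') trans G q q''.
Proof.
rewrite /trans big_mkcond /=.
under [RHS]eq_bigr do rewrite big_mkcond /=.
rewrite [RHS]big_mkcond /=.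
rewrite [RHS](eq_bigr (fun q'' => \sum_s (if mk q'' == c' then
   (if delta G q s == Some q'' then tpi G q s else 0) else 0))); last first.
  by move=> q'' _; case: (mk q'' == c') => //; rewrite big1.
rewrite exchange_big /=; apply: eq_bigr => s _.
rewrite qdelta_mk qtpi_mk.
case E: (delta G q s) => [y|] /=.
  rewrite (bigD1 y) //= eqxx /= big1 ?addr0.
    by rewrite some_eq.
  move=> i hi; rewrite (_ : (Some y == Some i) = false); first by case: (mk i == c').
  by apply/negbTE; apply: contra hi => /eqP [->].
by rewrite big1 // => i _; case: (mk i == c').
Qed.

Lemma qstationary : stationary qG qp.
Proof.
case: hp => hp0 [hp1 hp2]; split.
  by move=> c; apply: sumr_ge0 => q _.
split; first by rewrite /qp sum_part.
move=> c'.
rewrite /qp.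
under eq_bigr do rewrite mulr_suml.
rewrite (eq_bigr (fun c => \sum_(q | mk q == c) p q * trans qG (mk q) c')); last first.
  by move=> c _; apply: eq_bigr => q /eqP ->.
rewrite (sum_part (fun q => p q * trans qG (mk q) c')).
under eq_bigr do rewrite qtrans_mk mulr_sumr.
rewrite exchange_big /=; apply: eq_bigr => q'' _.
exact: hp2.
Qed.

Lemma qword_prob x : word_prob qG qp x = word_prob G p x.
Proof.
rewrite /word_prob /qp.
under eq_bigr do rewrite mulr_suml.
rewrite (eq_bigr (fun c => \sum_(q | mk q == c) p q * tpiw G q x)); last first.
  by move=> c _; apply: eq_bigr => q /eqP <-; rewrite qtpiw_mk.
exact: sum_part.
Qed.

Lemma qcard q1 q2 : q1 != q2 -> meq G G q1 q2 -> (#|{: QQ}| < #|Q|)%N.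
Proof.
move=> hne hm.
rewrite card_sig -(cardC [pred q | rep q == q]) -{1}[#|[pred q | _]|]addn0 ltn_add2l.
apply/card_gt0P.
have : ~~ ((rep q1 == q1) && (rep q2 == q2)).
  apply: contra hne => /andP [/eqP h1 /eqP h2].
  by rewrite -h1 -h2 (rep_eq hm).
rewrite negb_and => /orP [h|h]; [exists q1 | exists q2]; by rewrite !inE.
Qed.

End Quot.

Unset Implicit Arguments.

Theorem mainTheorem6 (R : realType) (S : finType) :
  (forall (Q : finType) (G : pfsa R S Q),
     irreducible G <-> (forall q q' : Q, equiv_states G q q' -> q = q')) /\
  (forall (Q1 Q2 : finType) (G1 : pfsa R S Q1) (G2 : pfsa R S Q2),
     irreducible G1 -> irreducible G2 -> same_process G1 G2 ->
     exists f : Q1 -> Q2, bijective f /\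
       (forall (q : Q1) (s : S),
          omap f (delta G1 q s) = delta G2 (f q) s /\ tpi G2 (f q) s = tpi G1 q s)).
Proof.
have part1 : forall (Q : finType) (G : pfsa R S Q),
    irreducible G <-> (forall q q' : Q, equiv_states G q q' -> q = q').
  move=> Q G; split.
    move=> hirr q q' heq; apply: contrapT => hne; apply: hirr.
    have [p hp] := exists_stationary G q.
    exists _, (qG G); split.
      by apply: (qcard (q1 := q) (q2 := q')) => //; apply/eqP.
    exists p, (@qp _ _ _ G p); split => //; first exact: qstationary.
    by move=> x; rewrite qword_prob.
  move=> hdist [Q' [H [hcard [p1 [p2 [[h10 [h11 _]] [h20 [h21 _]] hw]]]]]].
  have [f hf] := choice (key_all h10 h11 h20 hw).
  have finj : injective f.
    by move=> a b hab; apply: hdist => w; rewrite (hf a w) hab -(hf b w).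
  by move: hcard; rewrite ltnNge (leq_card f finj).
split => //.
move=> Q1 Q2 G1 G2 hi1 hi2 [p1 [p2 [[h10 [h11 _]] [h20 [h21 _]] hw]]].
have d1 := (part1 _ G1).1 hi1.
have d2 := (part1 _ G2).1 hi2.
have [f hf] := choice (key_all h10 h11 h20 hw).
have [g hg] := choice (key_all h20 h21 h10 (fun x => esym (hw x))).
exists f; split.
  exists g => [q|h].
    by apply: d1 => w; rewrite -(hg (f q) w) (hf q w).
  by apply: d2 => w; rewrite -(hf (g h) w) (hg h w).
move=> q s; split; last exact: meq_tpi s (hf q).
case E: (delta G1 q s) => [y|] /=.
  have [y' [-> hm _]] := meq_succ (hf q) E.
  by congr Some; apply: d2 => w; rewrite -(hf y w) hm.
by rewrite (meq_delta_none (hf q) E).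
Qed.
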